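(* Let $M_1$ be the trefoil exterior, with $\pi_1(M_1)=B_3=\langle\sigma_1,\sigma_2\mid\sigma_1\sigma_2\sigma_1=\sigma_2\sigma_1\sigma_2\rangle$, peripheral subgroup $\langle\sigma_2,\Delta^2\rangle$ where $\Delta=\sigma_1\sigma_2\sigma_1$ (meridian $\sigma_2$), and let $M_2$ be the twisted $I$-bundle over the Klein bottle, with $\pi_1(M_2)=\langle x,y\mid xyx^{-1}=y^{-1}\rangle$ and peripheral subgroup $\langle y,x^2\rangle$. Let $M=M_1\cup_\phi M_2$, where the boundary homeomorphism $\phi$ acts on peripheral subgroups by $\phi(\sigma_2)=y^{-1}$, $\phi(\Delta^2)=y^{-1}x^2$. Then there is no slope $\alpha$ on $\partial M_1$ such that both $\alpha$ and $\phi(\alpha)$ are left-orderable slopes; i.e. the criterion ''a left-orderable slope $\alpha$ with $\phi_*(\alpha)$ left-orderable implies $\pi_1(M)$ left-orderable'' cannot be applied to $M$.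
   Context: For a 3-manifold $N$ with torus boundary, a slope is an isotopy class of essential simple closed curve on $\partial N$ (a primitive peripheral element up to sign), and it is a left-orderable slope if $\pi_1(N)/\langle\langle\alpha\rangle\rangle$ (the fundamental group of the Dehn filling along $\alpha$) is left-orderable; the trivial group is not left-orderable. *)

(* Defs.v *)
(* Finitely presented groups are encoded by words over a
   generating set; the group <S | R> is words modulo the congruence [weq R]
   generated by free cancellation and insertion/deletion of relators. *)
From mathcomp Require Import all_boot all_order all_algebra.
Set Implicit Arguments. Unset Strict Implicit. Unset Printing Implicit Defensive.
Import GRing.Theory Num.Theory.

(* A letter is a generator together with an "inverse" flag (true = inverse). *)
Definition word (S : Type) := seq (S * bool).

Definition winv (S : Type) (w : word S) : word S :=
  rev (map (fun l => (l.1, ~~ l.2)) w).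

Definition wpow (S : Type) (w : word S) (n : int) : word S :=
  match n with
  | Posz k => flatten (nseq k w)
  | Negz k => flatten (nseq k.+1 (winv w))
  end.

Inductive weq (S : Type) (R : word S -> Prop) : word S -> word S -> Prop :=
| weq_refl w : weq R w w
| weq_sym u v : weq R u v -> weq R v u
| weq_trans u v w : weq R u v -> weq R v w -> weq R u w
| weq_cancel u v s b : weq R (u ++ (s, b) :: (s, ~~ b) :: v) (u ++ v)
| weq_rel u v r : R r -> weq R (u ++ r ++ v) (u ++ v).

Definition left_orderable (S : Type) (R : word S -> Prop) : Prop :=
  (exists w : word S, ~ weq R w [::]) /\
  exists lt : word S -> word S -> Prop,
    (forall u u' v v', weq R u u' -> weq R v v' -> lt u v -> lt u' v') /\
    (forall u, ~ lt u u) /\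
    (forall u v w, lt u v -> lt v w -> lt u w) /\
    (forall u v, weq R u v \/ lt u v \/ lt v u) /\
    (forall u v w, lt u v -> lt (w ++ u) (w ++ v)).

(* Trefoil exterior: pi_1 = B_3 = <s1, s2 | s1 s2 s1 = s2 s1 s2>. *)
Inductive genB3 := s1 | s2.
Definition braid_rel : word genB3 :=
  [:: (s1, false); (s2, false); (s1, false); (s2, true); (s1, true); (s2, true)].
Definition Delta : word genB3 := [:: (s1, false); (s2, false); (s1, false)].
Definition M1_periph (p q : int) : word genB3 :=
  wpow [:: (s2, false)] p ++ wpow (Delta ++ Delta) q.
(* Relators of pi_1(M1(alpha)) for alpha = sigma_2^p Delta^(2q). *)
Definition M1_filling (p q : int) (r : word genB3) : Prop :=
  r = braid_rel \/ r = M1_periph p q.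

(* Twisted I-bundle over the Klein bottle: <x, y | x y x^-1 = y^-1>. *)
Inductive genK := gx | gy.
Definition klein_rel : word genK :=
  [:: (gx, false); (gy, false); (gx, true); (gy, false)].
(* phi(sigma_2^p Delta^(2q)) = (y^-1)^p (y^-1 x^2)^q. *)
Definition M2_periph_phi (p q : int) : word genK :=
  wpow [:: (gy, true)] p ++ wpow [:: (gy, true); (gx, false); (gx, false)] q.
Definition M2_filling (p q : int) (r : word genK) : Prop :=
  r = klein_rel \/ r = M2_periph_phi p q.

(* Main.v *)
Require Import Defs.
From mathcomp Require Import all_boot all_order all_algebra.
From Stdlib Require Import Setoid Morphisms.
Set Implicit Arguments. Unset Strict Implicit.

Section Gen.
Variables (S : Type) (R : word S -> Prop).
Local Notation "u ~~ v" := (weq R u v) (at level 70).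
Local Hint Resolve weq_refl : core.

Lemma weq_catl w u v : u ~~ v -> (w ++ u) ~~ (w ++ v).
Proof.
elim=> {u v}.
- by move=> ?; apply: weq_refl.
- by move=> u v _ H; apply: weq_sym.
- by move=> u v x _ H1 _ H2; apply: weq_trans H2.
- by move=> u v s b; rewrite !catA; apply: weq_cancel.
- by move=> u v r Hr; rewrite !catA -(catA _ r); apply: weq_rel.
Qed.

Lemma weq_catr w u v : u ~~ v -> (u ++ w) ~~ (v ++ w).
Proof.
elim=> {u v}.
- by move=> ?; apply: weq_refl.
- by move=> u v _ H; apply: weq_sym.
- by move=> u v x _ H1 _ H2; apply: weq_trans H2.
- by move=> u v s b; rewrite -!catA /=; apply: weq_cancel.
- by move=> u v r Hr; rewrite -!catA; apply: weq_rel.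
Qed.

Global Instance weq_equiv : Equivalence (weq R).
Proof.
split; [exact: weq_refl | exact: weq_sym | exact: weq_trans].
Qed.

Global Instance weq_cat_proper : Proper (weq R ==> weq R ==> weq R) (@cat (S * bool)).
Proof.
move=> u u' Hu v v' Hv; apply: (@weq_trans _ _ _ (u ++ v')); [exact: weq_catl | exact: weq_catr].
Qed.

Lemma winv_cat (u v : word S) : winv (u ++ v) = winv v ++ winv u.
Proof. by rewrite /winv map_cat rev_cat. Qed.

Lemma winvK (w : word S) : winv (winv w) = w.
Proof. by elim: w => // [[s b] w IH]; rewrite -cat1s !winv_cat IH /= negbK. Qed.

Lemma winv_r w : (w ++ winv w) ~~ [::].
Proof.
elim: w => [|[s b] w IH]; first reflexivity.
rewrite -cat1s winv_cat catA -(catA [:: _]) IH /=.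
exact: (weq_cancel R [::] [::] s b).
Qed.

Lemma winv_l w : (winv w ++ w) ~~ [::].
Proof. by have := winv_r (winv w); rewrite winvK. Qed.

Lemma weq_winv u v : u ~~ v -> winv u ~~ winv v.
Proof.
move=> H.
transitivity (winv u ++ v ++ winv v); first by rewrite winv_r cats0.
transitivity (winv u ++ u ++ winv v).
  by apply: weq_catl; apply: weq_catr; symmetry.
by rewrite catA winv_l.
Qed.

Lemma rot_triv u v : (u ++ v) ~~ [::] -> (v ++ u) ~~ [::].
Proof.
move=> H.
transitivity (v ++ u ++ v ++ winv v); first by rewrite winv_r cats0.
by rewrite (catA u) H winv_r.
Qed.

Lemma eq_of_triv u v : (u ++ winv v) ~~ [::] -> u ~~ v.
Proof.
move=> H; transitivity (u ++ winv v ++ v); first by rewrite winv_l cats0.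
by rewrite catA H.
Qed.

Lemma rcancel_triv u w : (u ++ w) ~~ w -> u ~~ [::].
Proof.
move=> H; transitivity (u ++ w ++ winv w); first by rewrite winv_r cats0.
by rewrite catA H winv_r.
Qed.

Definition pw (w : word S) k := flatten (nseq k w).

Lemma pwS (w : word S) k : pw w k.+1 = w ++ pw w k.
Proof. by []. Qed.

Lemma pw1 (w : word S) : pw w 1 = w.
Proof. by rewrite /pw /= cats0. Qed.

Lemma pw_swap (w : word S) k : pw w k ++ w = w ++ pw w k.
Proof. by elim: k => /= [|k IH]; rewrite ?cats0 // -catA IH. Qed.

Lemma winv_pw (w : word S) k : winv (pw w k) = pw (winv w) k.
Proof. by elim: k => //= k IH; rewrite winv_cat IH pw_swap. Qed.

Lemma winv_wpow (w : word S) n : winv (wpow w n) = wpow (winv w) n.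
Proof. case: n => k; [exact: (winv_pw w k) | exact: (winv_pw (winv w) k.+1)]. Qed.

Lemma conj_pw x u v k : (x ++ u) ~~ (v ++ x) -> (x ++ pw u k) ~~ (pw v k ++ x).
Proof.
move=> H; elim: k => /= [|k IH]; first by rewrite cats0.
by rewrite catA H -catA IH catA.
Qed.

Lemma conj_inv x u v : (x ++ u) ~~ (v ++ x) -> (x ++ winv u) ~~ (winv v ++ x).
Proof.
move=> H.
transitivity (winv v ++ v ++ x ++ winv u); first by rewrite catA winv_l.
by rewrite (catA v) -H -catA winv_r cats0.
Qed.

Lemma conj_wpow x u v n : (x ++ u) ~~ (v ++ x) -> (x ++ wpow u n) ~~ (wpow v n ++ x).
Proof.
case: n => k H /=; first exact: conj_pw.
exact: (conj_pw k.+1 (conj_inv H)).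
Qed.

Lemma pw_mul u v k : (u ++ v) ~~ (v ++ u) -> pw (u ++ v) k ~~ (pw u k ++ pw v k).
Proof.
move=> H; elim: k => [|k IH]; first reflexivity.
rewrite !pwS IH -catA (catA v) (conj_pw k (symmetry H)).
by rewrite -!catA.
Qed.

Lemma wpow_mul u v n : (u ++ v) ~~ (v ++ u) -> wpow (u ++ v) n ~~ (wpow u n ++ wpow v n).
Proof.
case: n => k H /=; first exact: pw_mul.
have H' : (winv v ++ winv u) ~~ (winv u ++ winv v).
  by rewrite -!winv_cat; apply: weq_winv.
change (pw (winv (u ++ v)) k.+1 ~~ (pw (winv u) k.+1 ++ pw (winv v) k.+1)).
rewrite winv_cat (pw_mul k.+1 H').
apply: conj_pw; apply: symmetry.
apply: conj_pw; exact: symmetry H'.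
Qed.

Lemma lo_tf : left_orderable R -> forall g k, pw g k.+1 ~~ [::] -> g ~~ [::].
Proof.
move=> [_ [lt [Hc [Hirr [Htr [Htot Hinv]]]]]] g k Hg.
case: (Htot g [::]) => [//|[H|H]].
- have : forall j, lt (pw g j.+1) [::].
    elim=> [|j IH]; first by rewrite pwS /pw /= cats0.
    rewrite pwS; apply: Htr H; have := Hinv _ _ g IH; by rewrite cats0.
  move=> /(_ k) H2; case: (Hirr [::]); exact: Hc H2.
- have : forall j, lt [::] (pw g j.+1).
    elim=> [|j IH]; first by rewrite pwS /pw /= cats0.
    rewrite pwS; apply: Htr H _; have := Hinv _ _ g IH; by rewrite cats0.
  move=> /(_ k) H2; case: (Hirr [::]); apply: Hc H2 => //; reflexivity.
Qed.

Lemma lo_tf_wpow : left_orderable R -> forall g (n : int), n != 0 -> wpow g n ~~ [::] -> g ~~ [::].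
Proof.
move=> LO g [[|k]|k] // _ H.
- exact: (lo_tf LO (k := k) H).
- have H2 := lo_tf LO (g := winv g) (k := k) H.
  by rewrite -(winvK g); apply: (weq_winv H2).
Qed.

Lemma letter_triv s b : [:: (s, false)] ~~ [::] -> [:: (s, b)] ~~ [::].
Proof.
case: b => // H.
transitivity ([:: (s, false)] ++ [:: (s, true)]); first by rewrite H.
exact: (weq_cancel R [::] [::] s false).
Qed.

Lemma all_triv : (forall s, [:: (s, false)] ~~ [::]) -> forall w, w ~~ [::].
Proof.
move=> H; elim=> [|[s b] w IH]; first reflexivity.
by rewrite -cat1s IH letter_triv.
Qed.

Lemma lo_nontriv : left_orderable R -> ~ (forall s, [:: (s, false)] ~~ [::]).
Proof. by move=> [[w Hw] _] H; apply: Hw; apply: all_triv. Qed.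

End Gen.

Section M2.
Variables (p q : int).
Local Notation R := (M2_filling p q).
Local Notation "u ~~ v" := (weq R u v) (at level 70).
Local Hint Resolve weq_refl : core.

Definition X1 := (gx, false).
Definition Xi := (gx, true).
Definition Y := (gy, false).
Definition Yi := (gy, true).

Lemma K_triv : [:: X1; Y; Xi; Y] ~~ [::].
Proof.
have := @weq_rel _ R [::] [::] _ (or_introl erefl : R klein_rel).
by [].
Qed.

Lemma P_triv : M2_periph_phi p q ~~ [::].
Proof.
have := @weq_rel _ R [::] [::] _ (or_intror erefl : R (M2_periph_phi p q)).
move=> H; rewrite -[M2_periph_phi p q]cats0; exact: H.
Qed.

Lemma xyi : ([:: X1] ++ [:: Yi]) ~~ ([:: Y] ++ [:: X1]).
Proof.
apply: eq_of_triv.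
have := weq_winv K_triv => /= H.
exact: (rot_triv (u := [:: Yi]) (v := [:: X1; Yi; Xi]) H).
Qed.

Lemma xy : ([:: X1] ++ [:: Y]) ~~ ([:: Yi] ++ [:: X1]).
Proof. exact: (conj_inv (x := [:: X1]) (u := [:: Yi]) (v := [:: Y]) xyi). Qed.

Lemma XXyi : ([:: Yi] ++ [:: X1; X1]) ~~ ([:: X1; X1] ++ [:: Yi]).
Proof.
symmetry.
transitivity ([:: X1] ++ ([:: X1] ++ [:: Yi])); first by [].
rewrite xyi.
transitivity (([:: X1] ++ [:: Y]) ++ [:: X1]); first by [].
by rewrite xy.
Qed.

Lemma M2_not_lo : q != 0 -> ~ left_orderable R.
Proof.
move=> q0 LO.
set A := wpow [:: Yi] p ++ wpow [:: Yi] q.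
set B := wpow [:: X1; X1] q.
have HAB : (A ++ B) ~~ [::].
  rewrite -P_triv /M2_periph_phi /A -catA.
  apply: weq_catl; symmetry.
  exact: (wpow_mul q XXyi).
set A' := wpow [:: Y] p ++ wpow [:: Y] q.
have HA'B : (A' ++ B) ~~ [::].
  apply: (@rcancel_triv _ _ _ [:: X1]).
  transitivity ([:: X1] ++ (A ++ B)); last by rewrite HAB.
  symmetry.
  rewrite /A /A' !catA (conj_wpow p xyi) -(catA _ [:: X1]) (conj_wpow q xyi) -!catA. apply: weq_catl; apply: weq_catl.
  exact: (conj_wpow q (x := [:: X1]) (u := [:: X1; X1]) (v := [:: X1; X1]) (weq_refl _ _)).
have HwA : A' ~~ winv A.
  rewrite /A /A' winv_cat !winv_wpow /=.
  have h1 : ([:: Y] ++ wpow [:: Y] q) ~~ (wpow [:: Y] q ++ [:: Y]).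
    exact: conj_wpow.
  symmetry; exact: (conj_wpow p (symmetry h1)).
have HAA : A ~~ A'.
  transitivity (winv B).
    transitivity (A ++ B ++ winv B); first by rewrite winv_r cats0.
    by rewrite catA HAB.
  symmetry.
  transitivity (A' ++ B ++ winv B); first by rewrite winv_r cats0.
  by rewrite catA HA'B.
have HA : A ~~ [::].
  apply: (lo_tf LO (k := 1)).
  rewrite pwS pw1.
  transitivity (winv A ++ A); last exact: winv_l.
  by rewrite -HwA -HAA.
have HB : B ~~ [::] by rewrite -HAB HA.
have Hx : [:: X1] ~~ [::].
  apply: (lo_tf LO (k := 1)).
  rewrite pwS pw1.
  exact: (lo_tf_wpow LO q0 HB).
have Hxi : [:: Xi] ~~ [::] by exact: letter_triv.
have Hy : [:: Y] ~~ [::].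
  apply: (lo_tf LO (k := 1)).
  rewrite pwS pw1.
  transitivity ([:: X1] ++ [:: Y] ++ [:: Xi] ++ [:: Y]); last exact: K_triv.
  by rewrite Hx Hxi.
apply: (lo_nontriv LO) => -[]; [exact: Hx | exact: Hy].
Qed.

End M2.

Lemma M1_triv (p : int) : (p = 1 \/ p = -1)%R -> ~ left_orderable (M1_filling p 0).
Proof.
move=> hp LO.
set R := M1_filling p 0.
have Hbr : weq R braid_rel [::].
  have := @weq_rel _ R [::] [::] _ (or_introl erefl : R braid_rel).
  by move=> H; rewrite -[braid_rel]cats0; exact: H.
have Hp : weq R (M1_periph p 0) [::].
  have := @weq_rel _ R [::] [::] _ (or_intror erefl : R (M1_periph p 0)).
  by move=> H; rewrite -[M1_periph p 0]cats0; exact: H.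
have H2 : weq R [:: (s2, false)] [::].
  case: hp Hp => -> H.
  - exact: H.
  - by have := weq_winv H.
have H2i : weq R [:: (s2, true)] [::] by exact: letter_triv.
have H1 : weq R [:: (s1, false)] [::].
  transitivity ([:: (s1, false)] ++ [:: (s1, false); (s1, true)]).
    symmetry; exact: (weq_cancel R [:: (s1, false)] [::] s1 false).
  transitivity ([:: (s1, false)] ++ [:: (s2, false)] ++ [:: (s1, false)] ++ [:: (s2, true)]
     ++ [:: (s1, true)] ++ [:: (s2, true)]); last exact: Hbr.
  rewrite H2 H2i; reflexivity.
apply: (lo_nontriv LO) => -[]; [exact: H1 | exact: H2].
Qed.

Theorem proposition25 (p q : int) :
  gcdz p q = 1%N ->
  ~ (left_orderable (M1_filling p q) /\ left_orderable (M2_filling p q)).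
Proof.
move=> hg [LO1 LO2].
have [q0|q0] := eqVneq q 0.
- subst q; apply: (M1_triv _ LO1).
  move: hg; rewrite gcdz0; case: p {LO1 LO2} => [[|[|k]]|[|k]] //= _.
  + by left.
  + by right.
- exact: (M2_not_lo q0 LO2).
Qed.
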